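(* Let $\varphi=\frac{1+\sqrt5}{2}$. Let $z\in\{0,1\}^*$, $n=[z]_F$ and $n'=[z0]_F$, and suppose $n\geq 1$ and ${\bf f}[n]=a$. Then $\lceil n/\varphi^2\rceil=\lceil n'/\varphi^3\rceil$.
   Context: Fibonacci numbers: $F_0=0$, $F_1=1$, $F_{m+2}=F_{m+1}+F_m$. For a binary word $k_m\cdots k_0$, $[k_m\cdots k_0]_F=\sum_{i=0}^m k_iF_{i+2}$. Standard Fibonacci words: $f_{-1}=b$, $f_0=a$, $f_{m+1}=f_mf_{m-1}$; the Fibonacci word ${\bf f}=\lim f_m=abaababaab\cdots$ is indexed from ${\bf f}[1]=a$. *)

(* Defs.v *)
From mathcomp Require Import all_boot all_order all_algebra.
From mathcomp Require Import reals.
Set Implicit Arguments. Unset Strict Implicit. Unset Printing Implicit Defensive.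
Import Order.TTheory GRing.Theory Num.Theory.

Fixpoint fib (m : nat) : nat :=
  match m with
  | 0 => 0
  | 1 => 1
  | (m'.+1 as k).+1 => fib k + fib m'
  end.

(* A binary word z = k_m ... k_0 is a seq bool written in reading order
   (most significant letter k_m first, k_0 last).
   [k_m ... k_0]_F = \sum_i k_i F_{i+2}. *)
Definition evalF (z : seq bool) : nat :=
  \sum_(i < size z) (nth false (rev z) i) * fib i.+2.

Inductive letter := La | Lb.

(* fw k = f_{k-1}: fw 0 = f_{-1} = b, fw 1 = f_0 = a, f_{m+1} = f_m f_{m-1}. *)
Fixpoint fw (k : nat) : seq letter :=
  match k with
  | 0 => [:: Lb]
  | 1 => [:: La]
  | (k'.+1 as j).+1 => fw j ++ fw k'
  end.

(* The infinite Fibonacci word f = lim f_m, indexed from 1: f[n].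
   f_{n+1} = fw (n.+2) is a prefix of f of length F_{n+3} >= n. *)
Definition fword (n : nat) : letter := nth La (fw n.+2) n.-1.

Definition phi {R : realType} : R := (1 + Num.sqrt 5) / 2.

(* Main.v *)
Require Import Defs.
From mathcomp Require Import all_boot all_order all_algebra.
From mathcomp Require Import reals.
From mathcomp Require Import zify ring lra.
Import Order.TTheory GRing.Theory Num.Theory.

Arguments fib : simpl never.
Lemma fibSS n : fib n.+2 = (fib n.+1 + fib n)%N. Proof. by []. Qed.

Arguments fw : simpl never.
Lemma fwSS n : fw n.+2 = fw n.+1 ++ fw n. Proof. by []. Qed.

Definition G (j : nat) (s : seq bool) : nat :=
  \sum_(i < size s) nth false s i * fib (i + j).

Lemma G_nil j : G j [::] = 0%N.
Proof. by rewrite /G big_ord0. Qed.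

Lemma G_cons j k s : G j (k :: s) = (k * fib j + G j.+1 s)%N.
Proof.
rewrite /G /= big_ord_recl /=; congr (_ + _)%N.
by apply: eq_bigr => i _; rewrite addSnnS.
Qed.

Lemma G_rec j s : G j.+2 s = (G j.+1 s + G j s)%N.
Proof.
rewrite /G -big_split /=; apply: eq_bigr => i _.
by rewrite !addnS fibSS mulnDr.
Qed.

Lemma G_cat j s t : G j (s ++ t) = (G j s + G (size s + j) t)%N.
Proof.
elim: s j => [|k s IH] j /=; first by rewrite G_nil.
by rewrite !G_cons IH addnA addSnnS.
Qed.

Lemma G_nseq j d u : G j (nseq d false ++ u) = G (d + j) u.
Proof.
elim: d j => [|d IH] j //=.
by rewrite G_cons IH mul0n add0n addSnnS.
Qed.

Lemma evalF_G z : evalF z = G 2 (rev z).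
Proof.
rewrite /evalF /G size_rev; apply: eq_bigr => i _; by rewrite addn2.
Qed.

Fixpoint Ev (s : seq bool) : bool :=
  match s with
  | true :: _ => true
  | false :: false :: s' => Ev s'
  | _ => false
  end.

Lemma Ev_cat s t : Ev s -> Ev (s ++ t).
Proof.
move: {2}(size s) (leqnn (size s)) => n; elim: n s => [|n IH] [|[] s] //=.
case: s => [|[] s] //= Hs H; apply: IH => //. exact: ltnW.
Qed.

Lemma size_fw k : size (fw k) = fib k.+1.
Proof.
elim: k {-2}k (leqnn k) => [|k IH] [|[|j]] // Hj.
rewrite fwSS size_cat !IH ?(fibSS j.+1) //; lia.
Qed.

Lemma fw_claim k m : (1 <= m <= fib k.+1)%N -> nth La (fw k) m.-1 = La ->
  exists s, [/\ Ev s, G 2 s = m & (size s <= k)%N].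
Proof.
elim: k {-2}k (leqnn k) m => [|k IH] [|[|j]] Hj m //.
- move=> /andP[H1 H2]; have E : m = 1%N by move: H2; have ->: fib 1 = 1%N by []; lia.
  by rewrite E => H; discriminate.
- move=> /andP[H1 H2]; have E : m = 1%N by move: H2; have ->: fib 1 = 1%N by []; lia.
  by rewrite E => H; discriminate.
- move=> /andP[H1 H2]; have E : m = 1%N by move: H2; have ->: fib 2 = 1%N by []; lia.
  by rewrite E => _; exists [:: true]; split => //; rewrite /G big_ord1.
- rewrite fibSS => /andP [Hm1 Hm2].
  rewrite fwSS nth_cat size_fw.
  case: ifP => Hlt.
    move=> Ha; have [s [E1 E2 E3]] := IH j.+1 Hj m (ltac:(lia)) Ha.
    by exists s; split => //; lia.
  move=> Ha; move/negbT: Hlt; rewrite -leqNgt => Hlt.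
  have Ha' : nth La (fw j) (m - fib j.+2).-1 = La by have -> : ((m - fib j.+2).-1 = m.-1 - fib j.+2)%N by lia.
  have [s [E1 E2 E3]] := IH j (ltac:(lia)) (m - fib j.+2)%N (ltac:(lia)) Ha'.
  exists (s ++ nseq (j - size s) false ++ [:: true]); split.
  - exact: Ev_cat.
  - rewrite G_cat G_nseq E2 /G big_ord1 /= mul1n.
    have -> : (j - size s + (size s + 2) = j.+2)%N by lia.
    rewrite add0n; lia.
  - rewrite size_cat size_cat size_nseq /=; lia.
Qed.
Local Open Scope ring_scope.

Section R.
Variable R : realType.

Lemma phi_facts : (phi : R) ^+ 2 = phi + 1 /\ 3/2 < (phi : R) < 2.
Proof.
rewrite /phi.
have h5 : (0 : R) <= 5 by [].
have hs := sqr_sqrtr h5.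
have hs0 : 0 <= Num.sqrt (5 : R) by exact: sqrtr_ge0.
set s := Num.sqrt 5 in hs hs0 *.
split; first by rewrite expr2 in hs *; nra.
apply/andP; split; rewrite expr2 in hs; nra.
Qed.

Definition e (s : seq bool) : R := (G 3 s)%:R - phi * (G 2 s)%:R.

Lemma e_cons (k : bool) s : e (k :: s) = (k : nat)%:R * (2 - phi) + (1 - phi) * e s.
Proof.
have [h2 _] := phi_facts.
rewrite /e !G_cons G_rec.
have -> : fib 3 = 2%N by [].
have -> : fib 2 = 1%N by [].
rewrite !natrD !natrM.
set x := (G 2 s)%:R; set y := (G 3 s)%:R; set kk := (k : nat)%:R.
have hx : phi ^+ 2 * x = phi * x + x by rewrite h2 mulrDl mul1r.
rewrite expr2 in hx.
have -> : (2 : nat)%:R = 2 :> R by [].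
lra.
Qed.


Lemma e_nil : e [::] = 0.
Proof. by rewrite /e !G_nil mulr0 subr0. Qed.

Lemma e_bound s : (phi : R) - 2 < e s < phi - 1.
Proof.
have [h2 /andP[p1 p2]] := phi_facts.
rewrite expr2 in h2.
elim: s => [|k s IH]; first by rewrite e_nil; apply/andP; split; lra.
move/andP: IH => [l u].
rewrite e_cons; move: l u; set E := e s => l u.
have q1 : 0 < (phi - 1) * (phi - 1 - E) by apply: mulr_gt0; lra.
have q2 : 0 < (phi - 1) * (E - (phi - 2)) by apply: mulr_gt0; lra.
case: k => /=; rewrite ?mul1r ?mul0r ?add0r; apply/andP; split.
all: lra.
Qed.

Lemma e_pos s : Ev s -> 0 < e s.
Proof.
have [h2 /andP[p1 p2]] := phi_facts.
rewrite expr2 in h2.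
move: {2}(size s) (leqnn (size s)) => n; elim: n s => [|n IH] [|[] s] //=.
  move=> _ _; rewrite e_cons mul1r.
  have /andP[l u] := e_bound s.
  have q1 : 0 < (phi - 1) * (phi - 1 - e s) by apply: mulr_gt0; lra.
  nra.
case: s => [|[] s] //= Hs H.
have := IH s (ltnW Hs) H.
rewrite !e_cons !mul0r !add0r => h.
have : 0 < (phi - 1) * (phi - 1) * e s by apply: mulr_gt0 => //; apply: mulr_gt0; lra.
nra.
Qed.


Lemma fib_ge n : (n.+1 <= fib n.+2)%N.
Proof.
elim: n {-2}n (leqnn n) => [|k IH] [|[|j]] Hj //.
rewrite fibSS; have := IH j.+1 Hj; have := IH j (ltnW Hj); lia.
Qed.

Lemma fword_rep n : (1 <= n)%N -> fword n = La -> exists s, Ev s /\ G 2 s = n.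
Proof.
move=> Hn Ha; have := fib_ge n.+1 => Hf.
have [s [E1 E2 _]] := @fw_claim n.+2 n (ltac:(lia)) Ha.
by exists s.
Qed.

Lemma inv_phi2 : ((phi : R) ^+ 2)^-1 = 2 - phi.
Proof.
have [h2 /andP[p1 p2]] := phi_facts.
have u : (phi : R) ^+ 2 \is a GRing.unit by rewrite unitfE h2; apply/eqP; lra.
apply: (mulrI u); rewrite divrr // h2; rewrite expr2 in h2; lra.
Qed.

Lemma inv_phi3 : ((phi : R) ^+ 3)^-1 = 2 * phi - 3.
Proof.
have [h2 /andP[p1 p2]] := phi_facts.
have h3 : (phi : R) ^+ 3 = 2 * phi + 1 by rewrite exprS h2; rewrite expr2 in h2; lra.
have u : (phi : R) ^+ 3 \is a GRing.unit by rewrite unitfE h3; apply/eqP; lra.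
apply: (mulrI u); rewrite divrr // h3; rewrite expr2 in h2; lra.
Qed.

End R.

Theorem proposition5 (R : realType) (z : seq bool) :
  (1 <= evalF z)%N ->
  fword (evalF z) = La ->
  Num.ceil ((evalF z)%:R / (phi : R) ^+ 2) =
  Num.ceil ((evalF (rcons z false))%:R / (phi : R) ^+ 3).
Proof.
move=> Hn Ha.
have [s [Es Gs]] := @fword_rep _ Hn Ha.
have [h2 /andP[p1 p2]] := phi_facts R.
rewrite expr2 in h2.
rewrite !evalF_G rev_rcons G_cons mul0n add0n in Gs *.
rewrite inv_phi2 inv_phi3.
set t := rev z in Gs *.
have es := @e_pos R s Es.
have /andP[ls us] := e_bound R s.
have /andP[lt ut] := e_bound R t.
have G3eq : G 3 s = G 3 t.
  move: es us lt ut; rewrite /e Gs.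
  move=> *.
  have a1 : (G 3 s)%:R < (G 3 t).+1%:R :> R by rewrite -natr1; lra.
  have a2 : (G 3 t)%:R < (G 3 s).+1%:R :> R by rewrite -natr1; lra.
  rewrite ltr_nat in a1; rewrite ltr_nat in a2; lia.
have et : e R t = e R s by rewrite /e G3eq Gs.
rewrite et in lt ut.
set E := e R s in es us et lt ut.
rewrite /e in et.
set n := (G 2 t)%:R : R in et *.
set n' := (G 3 t)%:R : R in et *.
have hn' : n' = phi * n + E by lra.
set c := Num.ceil (n * (2 - phi)).
have /andP[c1 c2] := ceil_itv (n * (2 - phi)).
rewrite -/c in c1 c2.
set K : int := c - (2 * G 2 t)%N%:Z + (G 3 t)%:Z.
have KR : K%:~R = c%:~R - 2 * n + n' :> R.
  have cz : forall m : nat, (m%:Z)%:~R = m%:R :> R by [].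
  by rewrite /K intrD intrB !cz natrM.
rewrite intrB in c1.
have K1 : K = 1.
  have k0 : (0 : R) < K%:~R by rewrite KR hn'; lra.
  have k2 : K%:~R < (2 : R) by rewrite KR hn'; lra.
  rewrite ltr0z in k0.
  have : K%:~R < (2 : int)%:~R :> R by [].
  rewrite ltr_int => k2'.
  lia.
rewrite K1 in KR.
have hc : c%:~R = n * (2 - phi) + 1 - E :> R by rewrite hn' in KR; lra.
symmetry; apply: ceil_def; rewrite intrB hc hn'.
have hpn : phi * phi * n = phi * n + n by rewrite h2 mulrDl mul1r.
have q1 : 0 < E * (phi - 1) by apply: mulr_gt0; lra.
have q2 : 0 < (phi - 1 - E) * (phi - 1) by apply: mulr_gt0; lra.
apply/andP; split; nra.
Qed.
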